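(* Let $a,b,e\in\mathbb{R}$ with $b\ne0$, and let $\alpha_i(t)$ ($i=1,\dots,4$) be scalar continuous functions. (i) Suppose $b\alpha_1(t)+\alpha_3(t)$ is $2\pi/|b|$-periodic and odd, and $a(a+e)<0$. Then the solution $$x(t)=\sqrt{-a(a+e)}\sin\Big(bt+\int_0^t(b\alpha_1(s)+\alpha_3(s))ds\Big),\ y(t)=\sqrt{-a(a+e)}\cos\Big(bt+\int_0^t(b\alpha_1(s)+\alpha_3(s))ds\Big),\ z(t)=-a$$ of the system $$\begin{aligned}\dot x&=(ax+by+xz)(1+\alpha_1(t))+x(a+z)\alpha_2(t)+y\alpha_3(t),\\ \dot y&=(-bx+ay+yz)(1+\alpha_1(t))+y(a+z)\alpha_2(t)-x\alpha_3(t),\\ \dot z&=(ez-x^2-y^2-z^2)(1+\alpha_1(t)+\alpha_2(t))\end{aligned}$$ is $2\pi/|b|$-periodic (the period not necessarily minimal). (ii) Suppose $b\alpha_1(t)+\alpha_3(t)+a^4\alpha_4(t)$ is $2\pi/|b|$-periodic and odd. Then the solution $$x(t)=a\sin\Big(bt+\int_0^t(b\alpha_1(s)+\alpha_3(s)+a^4\alpha_4(s))ds\Big),\ y(t)=a\cos\Big(bt+\int_0^t(b\alpha_1(s)+\alpha_3(s)+a^4\alpha_4(s))ds\Big),\ z(t)=-a$$ of the system $$\begin{aligned}\dot x&=(ax+by+xz)(1+\alpha_1(t))+x(a+z)\alpha_2(t)+y\alpha_3(t)-y(x^2+y^2)(4az+x^2+y^2+2z^2)\alpha_4(t),\\ \dot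 y&=(-bx+ay+yz)(1+\alpha_1(t))+y(a+z)\alpha_2(t)-x\alpha_3(t)+x(x^2+y^2)(4az+x^2+y^2+2z^2)\alpha_4(t),\\ \dot z&=-(2az+x^2+y^2+z^2)(1+\alpha_1(t)+\alpha_2(t))\end{aligned}$$ is $2\pi/|b|$-periodic (the period not necessarily minimal). *)

(* Defs.v *)
From Stdlib Require Import Reals.
From Coquelicot Require Import Coquelicot.
Open Scope R_scope.

Definition periodic (f : R -> R) (T : R) : Prop := forall t, f (t + T) = f t.

Definition odd_fun (f : R -> R) : Prop := forall t, f (- t) = - f t.

(* Main.v *)
Require Import Defs.
From Stdlib Require Import Reals Lra.
From Coquelicot Require Import Coquelicot.
Open Scope R_scope.

Lemma G_deriv (g : R -> R) t : (forall t, continuous g t) ->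
  is_derive (fun t => RInt g 0 t) t (g t).
Proof.
  intros Hc. apply is_derive_RInt with (a:=0); auto.
  apply filter_forall. intros u. apply RInt_correct.
  apply (@ex_RInt_continuous R_CompleteNormedModule). intros; auto.
Qed.

Lemma G_per (g : R -> R) T : (forall t, continuous g t) ->
  periodic g T -> odd_fun g -> forall t, RInt g 0 (t + T) = RInt g 0 t.
Proof.
  intros Hc Hp Ho.
  assert (Ex : forall u v, ex_RInt g u v) by (intros; apply (@ex_RInt_continuous R_CompleteNormedModule); auto).
  assert (Hsh : forall t, RInt g 0 (t+T) = RInt g 0 T + RInt g 0 t).
  { intros t. rewrite <- (RInt_Chasles g 0 T (t+T)) by auto.
    unfold plus; simpl.
    assert (E : RInt g 0 t = RInt (fun y => scal 1 (g (1 * y + T))) 0 t).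
    { apply RInt_ext. intros x _. unfold scal; simpl; unfold mult; simpl.
        replace (1*x+T) with (x+T) by ring. rewrite Hp. ring. }
    rewrite E, (@RInt_comp_lin R_CompleteNormedModule).
    replace (1*0+T) with T by ring. replace (1*t+T) with (t+T) by ring. ring.
    replace (1*0+T) with T by ring. replace (1*t+T) with (t+T) by ring. auto. }
  assert (Hev : forall t, RInt g 0 (-t) = RInt g 0 t).
  { intros t.
    assert (E : RInt g 0 t = RInt (fun y => scal (-1) (g (-1 * y + 0))) 0 t).
    { apply RInt_ext. intros x _. unfold scal; simpl; unfold mult; simpl.
        replace (-1*x+0) with (-x) by ring. rewrite Ho. ring. }
    rewrite E, (@RInt_comp_lin R_CompleteNormedModule). f_equal; try ring; auto. apply Ex. }
  assert (H0 : RInt g 0 T = 0).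
  { pose proof (Hsh (-(T/2))) as H1. replace (-(T/2)+T) with (T/2) in H1 by field.
    rewrite Hev in H1. lra. }
  intros t. rewrite Hsh, H0. apply Rplus_0_l.
Qed.

Lemma cont_comb (f g : R -> R) (c : R) : (forall t, continuous f t) -> (forall t, continuous g t) ->
  forall t, continuous (fun s => c * f s + g s) t.
Proof.
  intros Hf Hg t. apply (continuous_plus (fun s => c * f s) g).
  apply (continuous_mult (fun _ => c) f). apply continuous_const. auto. auto.
Qed.

Lemma th_per (g : R -> R) b : b <> 0 -> (forall t, continuous g t) ->
  periodic g (2*PI/Rabs b) -> odd_fun g ->
  forall t, sin (b*(t + 2*PI/Rabs b) + RInt g 0 (t + 2*PI/Rabs b)) = sin (b*t + RInt g 0 t)
   /\ cos (b*(t + 2*PI/Rabs b) + RInt g 0 (t + 2*PI/Rabs b)) = cos (b*t + RInt g 0 t).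
Proof.
  intros Hb Hc Hp Ho t. rewrite (G_per g _ Hc Hp Ho).
  set (X := b*t + RInt g 0 t).
  destruct (Rle_or_lt 0 b) as [Hpos|Hneg].
  - rewrite Rabs_pos_eq by lra.
    replace (b * (t + 2 * PI / b) + RInt g 0 t) with (X + 2*PI) by (unfold X; field; auto).
    rewrite sin_plus, cos_plus, sin_2PI, cos_2PI. split; ring.
  - rewrite Rabs_left by lra.
    replace (b * (t + 2 * PI / - b) + RInt g 0 t) with (X - 2*PI) by (unfold X; field; auto).
    rewrite sin_minus, cos_minus, sin_2PI, cos_2PI. split; ring.
Qed.

Lemma th_deriv (g : R -> R) b c t : (forall t, continuous g t) ->
  is_derive (fun t => c * sin (b*t + RInt g 0 t)) t (c * cos (b*t + RInt g 0 t) * (b + g t)) /\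
  is_derive (fun t => c * cos (b*t + RInt g 0 t)) t (- (c * sin (b*t + RInt g 0 t)) * (b + g t)).
Proof.
  intros Hc.
  assert (Hth : is_derive (fun t => b*t + RInt g 0 t) t (b + g t)).
  { apply (is_derive_plus (fun t => b*t) (fun t => RInt g 0 t)).
    - auto_derive; auto; ring.
    - apply G_deriv; auto. }
  split.
  - assert (Hs : is_derive (fun t => sin (b*t + RInt g 0 t)) t ((b + g t) * (cos (b*t + RInt g 0 t)))).
    { exact (is_derive_comp sin (fun t => b*t + RInt g 0 t) t _ _ (is_derive_sin _) Hth). }
    apply is_derive_scal with (k:=c) in Hs.
    replace (c * cos (b * t + RInt g 0 t) * (b + g t)) with (c * ((b + g t) * (cos (b * t + RInt g 0 t)))) by ring. exact Hs.
  - assert (Hs : is_derive (fun t => cos (b*t + RInt g 0 t)) t ((b + g t) * (- sin (b*t + RInt g 0 t)))).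
    { exact (is_derive_comp cos (fun t => b*t + RInt g 0 t) t _ _ (is_derive_cos _) Hth). }
    apply is_derive_scal with (k:=c) in Hs.
    replace (- (c * sin (b * t + RInt g 0 t)) * (b + g t)) with (c * ((b + g t) * (- sin (b * t + RInt g 0 t)))) by ring. exact Hs.
Qed.

Lemma sq_sub (c s k : R) : s^2 + k^2 = 1 -> (c*s)^2 = c^2 - (c*k)^2.
Proof. intros HS. replace (c^2) with (c^2*(s^2+k^2)) at 1 by (rewrite HS; ring). ring. Qed.

Ltac fin_deriv D :=
  match goal with |- is_derive _ _ ?r =>
    match type of D with is_derive _ _ ?r2 => replace r with r2; [exact D|] end end.

Theorem proposition1 (a b e : R) (al1 al2 al3 al4 : R -> R) :
  b <> 0 ->
  (forall t, continuous al1 t) -> (forall t, continuous al2 t) ->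
  (forall t, continuous al3 t) -> (forall t, continuous al4 t) ->
  (* part (i) *)
  ( periodic (fun t => b * al1 t + al3 t) (2 * PI / Rabs b) ->
    odd_fun (fun t => b * al1 t + al3 t) ->
    a * (a + e) < 0 ->
    let th := fun t => b * t + RInt (fun s => b * al1 s + al3 s) 0 t in
    let x := fun t => sqrt (- (a * (a + e))) * sin (th t) in
    let y := fun t => sqrt (- (a * (a + e))) * cos (th t) in
    let z := fun _ : R => - a in
    (forall t,
      is_derive x t ((a * x t + b * y t + x t * z t) * (1 + al1 t)
                     + x t * (a + z t) * al2 t + y t * al3 t) /\
      is_derive y t ((- b * x t + a * y t + y t * z t) * (1 + al1 t)
                     + y t * (a + z t) * al2 t - x t * al3 t) /\
      is_derive z t ((e * z t - x t ^ 2 - y t ^ 2 - z t ^ 2)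
                     * (1 + al1 t + al2 t))) /\
    periodic x (2 * PI / Rabs b) /\ periodic y (2 * PI / Rabs b) /\
    periodic z (2 * PI / Rabs b) ) /\
  (* part (ii) *)
  ( periodic (fun t => b * al1 t + al3 t + a ^ 4 * al4 t) (2 * PI / Rabs b) ->
    odd_fun (fun t => b * al1 t + al3 t + a ^ 4 * al4 t) ->
    let th := fun t => b * t + RInt (fun s => b * al1 s + al3 s + a ^ 4 * al4 s) 0 t in
    let x := fun t => a * sin (th t) in
    let y := fun t => a * cos (th t) in
    let z := fun _ : R => - a in
    (forall t,
      is_derive x t ((a * x t + b * y t + x t * z t) * (1 + al1 t)
                     + x t * (a + z t) * al2 t + y t * al3 t
                     - y t * (x t ^ 2 + y t ^ 2)
                       * (4 * a * z t + x t ^ 2 + y t ^ 2 + 2 * z t ^ 2) * al4 t) /\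
      is_derive y t ((- b * x t + a * y t + y t * z t) * (1 + al1 t)
                     + y t * (a + z t) * al2 t - x t * al3 t
                     + x t * (x t ^ 2 + y t ^ 2)
                       * (4 * a * z t + x t ^ 2 + y t ^ 2 + 2 * z t ^ 2) * al4 t) /\
      is_derive z t (- (2 * a * z t + x t ^ 2 + y t ^ 2 + z t ^ 2)
                     * (1 + al1 t + al2 t))) /\
    periodic x (2 * PI / Rabs b) /\ periodic y (2 * PI / Rabs b) /\
    periodic z (2 * PI / Rabs b) ).

Proof.
  intros Hb H1 H2 H3 H4. split.
  - intros Hp Ho Hn. cbv zeta.
    set (g := fun s => b * al1 s + al3 s) in *.
    set (c := sqrt (- (a * (a + e)))).
    assert (Hc2 : c^2 = -(a*(a+e))).
    { replace (c^2) with (c*c) by ring. unfold c; apply sqrt_sqrt; lra. }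
    assert (Hc : forall t, continuous g t) by (apply cont_comb; auto).
    split; [intros t; destruct (th_deriv g b c t Hc) as [Dx Dy]; split; [|split] | split; [|split]].
    + cbv beta. fin_deriv Dx. unfold g; ring.
    + cbv beta. fin_deriv Dy. unfold g; ring.
    + cbv beta.
      assert (HS : sin (b * t + RInt g 0 t) ^ 2 + cos (b * t + RInt g 0 t) ^ 2 = 1).
      { rewrite <- (sin2_cos2 (b * t + RInt g 0 t)). unfold Rsqr; ring. }
      rewrite (sq_sub c _ _ HS), Hc2.
      replace ((e * - a - (- (a * (a + e)) - (c * cos (b * t + RInt g 0 t)) ^ 2) -
        (c * cos (b * t + RInt g 0 t)) ^ 2 - (- a) ^ 2) * (1 + al1 t + al2 t)) with (@zero R_NormedModule)
        by (unfold zero; simpl; ring).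
      apply is_derive_const.
    + intros t; destruct (th_per g b Hb Hc Hp Ho t) as [S C]. cbv beta. rewrite S. reflexivity.
    + intros t; destruct (th_per g b Hb Hc Hp Ho t) as [S C]. cbv beta. rewrite C. reflexivity.
    + intros t. reflexivity.
  - intros Hp Ho. cbv zeta.
    set (g := fun s => b * al1 s + al3 s + a ^ 4 * al4 s) in *.
    assert (Hc : forall t, continuous g t).
    { intros t. apply (continuous_plus (fun s => b * al1 s + al3 s) (fun s => a ^ 4 * al4 s)).
      apply cont_comb; auto.
      apply (continuous_mult (fun _ => a ^ 4) al4). apply continuous_const. auto. }
    split; [intros t; destruct (th_deriv g b a t Hc) as [Dx Dy]; split; [|split] | split; [|split]].
    + cbv beta.
      assert (HS : sin (b * t + RInt g 0 t) ^ 2 + cos (b * t + RInt g 0 t) ^ 2 = 1).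
      { rewrite <- (sin2_cos2 (b * t + RInt g 0 t)). unfold Rsqr; ring. }
      rewrite (sq_sub a _ _ HS).
      fin_deriv Dx. unfold g; ring.
    + cbv beta.
      assert (HS : sin (b * t + RInt g 0 t) ^ 2 + cos (b * t + RInt g 0 t) ^ 2 = 1).
      { rewrite <- (sin2_cos2 (b * t + RInt g 0 t)). unfold Rsqr; ring. }
      rewrite (sq_sub a _ _ HS).
      fin_deriv Dy. unfold g; ring.
    + cbv beta.
      assert (HS : sin (b * t + RInt g 0 t) ^ 2 + cos (b * t + RInt g 0 t) ^ 2 = 1).
      { rewrite <- (sin2_cos2 (b * t + RInt g 0 t)). unfold Rsqr; ring. }
      rewrite (sq_sub a _ _ HS).
      match goal with |- is_derive _ _ ?r => replace r with (@zero R_NormedModule) by (unfold zero; simpl; ring) end.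
      apply is_derive_const.
    + intros t; destruct (th_per g b Hb Hc Hp Ho t) as [S C]. cbv beta. rewrite S. reflexivity.
    + intros t; destruct (th_per g b Hb Hc Hp Ho t) as [S C]. cbv beta. rewrite C. reflexivity.
    + intros t. reflexivity.
Qed.
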